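(* Let $\zeta\in\mathbb{C}^*$. The set $\{\mathcal{S}_{\frac rs}(\zeta) : \frac rs>1\}$ (which equals $\{\mathcal{R}_{\frac rs}(\zeta) : \frac rs>1\}$) is finite if and only if $\zeta$ is a primitive $n$-th root of unity for some $n\in\{2,3,4,5\}$.
   Context: Let $q$ be a formal parameter, $R_q=\begin{pmatrix} q & 1\\ 0 & 1\end{pmatrix}$, $S_q=\begin{pmatrix} 0 & -q^{-1}\\ 1 & 0\end{pmatrix}$, and for integers $c_1,\dots,c_k$ put $M_q(c_1,\dots,c_k)=R_q^{c_1}S_q\cdots R_q^{c_k}S_q$. Every irreducible fraction $\frac{r}{s}>1$ ($r,s$ positive coprime integers) has a unique negative continued fraction expansion $\frac{r}{s}=c_1-\cfrac{1}{c_2-\cfrac{1}{\ddots-\cfrac{1}{c_k}}}$ with all $c_i\ge 2$; define polynomials $\mathcal{R}_{\frac rs}(q),\mathcal{S}_{\frac rs}(q)$ by $M_q(c_1,\dots,c_k)=\begin{pmatrix}\mathcal{R}_{\frac rs}(q) & *\\ \mathcal{S}_{\frac rs}(q) & *\end{pmatrix}$. *)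

(* Defs.v *)
From HB Require Import structures.
From mathcomp Require Import all_boot all_order all_algebra.
From mathcomp Require Import complex.
From mathcomp Require Import Rstruct.
From Stdlib Require Rdefinitions.
Set Implicit Arguments. Unset Strict Implicit. Unset Printing Implicit Defensive.
Import Order.TTheory GRing.Theory Num.Theory.
Local Open Scope ring_scope.

Definition CC : fieldType := complex Rdefinitions.R.

Section QMatrices.
Variable F : fieldType.

(* R_q = [[q, 1], [0, 1]] *)
Definition Rq (q : F) : 'M[F]_2 :=
  \matrix_(i < 2, j < 2)
    if val i == 0%N then (if val j == 0%N then q else 1) else (if val j == 0%N then 0 else 1).

(* S_q = [[0, -q^-1], [1, 0]] *)
Definition Sq (q : F) : 'M[F]_2 :=
  \matrix_(i < 2, j < 2)
    if val i == 0%N then (if val j == 0%N then 0 else - q^-1) else (if val j == 0%N then 1 else 0).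

Definition Mq (q : F) (c : seq nat) : 'M[F]_2 :=
  foldr (fun ci M => (Rq q ^+ ci) * Sq q * M) 1 c.

(* R_{r/s}(q) and S_{r/s}(q) for a given expansion c : the (1,1) and (2,1) entries. *)
Definition Rpoly (q : F) (c : seq nat) : F := Mq q c ord0 ord0.
Definition Spoly (q : F) (c : seq nat) : F := Mq q c ord_max ord0.
End QMatrices.

Fixpoint negcf (c : seq nat) : rat :=
  match c with
  | [::] => 0
  | [:: a] => a%:R
  | a :: t => a%:R - (negcf t)^-1
  end.

(* c is the negative continued fraction expansion of x (all c_i >= 2, k >= 1).
   Such an expansion exists and is unique for every rational x > 1. *)
Definition is_negcf_expansion (x : rat) (c : seq nat) : Prop :=
  [/\ (0 < size c)%N, all (fun ci => 2 <= ci)%N c & negcf c = x].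

Definition S_values (zeta : CC) : CC -> Prop :=
  fun z => exists (x : rat) (c : seq nat),
      1 < x /\ is_negcf_expansion x c /\ z = Spoly zeta c.

Definition finite_subset (A : CC -> Prop) : Prop :=
  exists l : seq CC, forall z, A z -> z \in l.

(* Main.v *)
From Stdlib Require Import Rtrigo1 Rtrigo_calc Rtrigo_def RIneq.
Require Import Defs.
From HB Require Import structures.
From mathcomp Require Import all_boot all_order all_algebra all_field.
From mathcomp Require Import complex Rstruct.
From mathcomp Require Import ring lra zify.
Import Order.TTheory GRing.Theory Num.Theory.
Set Warnings "-notation-overridden -ambiguous-paths".
Set Implicit Arguments. Unset Strict Implicit.
Local Open Scope ring_scope.
Local Notation R := Rdefinitions.R.

From Stdlib Require Import Classical.

Section Mat.
Variable F : fieldType.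
Definition sq (q : F) a := \sum_(i < a) q ^+ i.

Lemma sqS (q : F) a : sq q a.+1 = 1 + q * sq q a.
Proof. by rewrite /sq big_ord_recl expr0 mulr_sumr; congr (_ + _); apply: eq_bigr => i _; rewrite exprS. Qed.

Lemma Rq_pow (q : F) a : Rq q ^+ a = \matrix_(i < 2, j < 2)
    if val i == 0%N then (if val j == 0%N then q ^+ a else sq q a) else (if val j == 0%N then 0 else 1).
Proof.
elim: a => [|a IH].
  apply/matrixP => i j; rewrite !mxE /sq big_ord0.
  by case: i j => [[|[|//]] ?] [[|[|//]] ?].
rewrite exprS IH; apply/matrixP => i j; rewrite !mxE !big_ord_recl big_ord0 !mxE /=.
case: i j => [[|[|//]] ?] [[|[|//]] ?] /=; rewrite ?sqS ?exprS; ring.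
Qed.
Lemma Mq_col0 (q : F) a t :
  Mq q (a :: t) ord0 ord0 = sq q a * Mq q t ord0 ord0 - q ^+ a * q^-1 * Mq q t ord_max ord0.
Proof.
rewrite /= Rq_pow !mxE !big_ord_recl big_ord0 !mxE !big_ord_recl !big_ord0 !mxE /=.
have -> : lift ord0 (ord0 : 'I_1) = ord_max :> 'I_2 by apply: val_inj.
ring.
Qed.
Lemma Mq_col1 (q : F) a t :
  Mq q (a :: t) ord_max ord0 = Mq q t ord0 ord0.
Proof.
rewrite /= Rq_pow !mxE !big_ord_recl big_ord0 !mxE !big_ord_recl !big_ord0 !mxE /=.
have -> : lift ord0 (ord0 : 'I_1) = ord_max :> 'I_2 by apply: val_inj.
ring.
Qed.
Lemma Mq_nil00 (q : F) : Mq q [::] ord0 ord0 = 1.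
Proof. by rewrite /= mxE. Qed.
Lemma Mq_nil10 (q : F) : Mq q [::] ord_max ord0 = 0.
Proof. by rewrite /= mxE. Qed.
End Mat.

Lemma cis_pow (th : R) k : ((Complex (cos th) (sin th) : CC) ^+ k) = Complex (cos (k%:R * th)) (sin (k%:R * th)).
Proof.
elim: k => [|k IH].
  by rewrite expr0 RmultE mulr0n mul0r cos_0 sin_0.
rewrite exprS IH; apply/eqP; rewrite eq_complex /= !RmultE.
rewrite -natr1 mulrDl mul1r cosD sinD.
by apply/andP; split; apply/eqP; ring.
Qed.

Lemma PI2E : PI *+ 2 = Rmult (Rdefinitions.IZR 2) PI.
Proof. by rewrite mulr2n; apply: Rplus_diag. Qed.

Lemma trig_root n : (6 <= n)%N -> exists z0 : CC,
  [/\ n.-primitive_root z0, 1 <= 2 * complex.Re z0 & complex.Re z0 ^+ 2 + complex.Im z0 ^+ 2 = 1].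
Proof.
move=> n6; have n0 : (0 < n)%N by apply: leq_trans n6.
have nR0 : (n%:R : R) != 0 by rewrite pnatr_eq0 -lt0n.
set th : R := GRing.mul (PI *+ 2) (GRing.inv (n%:R : R)).
have PIgt0 : (0 < PI)%R by apply/RltP; apply: PI_RGT_0.
have thgt0 : 0 < th by rewrite /th divr_gt0 // ?mulrn_wgt0 // ltr0n.
have zn : (Complex (cos th) (sin th) : CC) ^+ n = 1.
  rewrite cis_pow !RmultE /th mulrC -mulrA mulVf // mulr1.
  by rewrite PI2E cos_2PI sin_2PI.
have [m pm mn] := prim_order_exists n0 zn.
have m0 : (0 < m)%N := prim_order_gt0 pm.
have mlen : (m <= n)%N := dvdn_leq n0 mn.
have en : n = m.
  apply/eqP; rewrite eq_sym eqn_leq mlen /=; rewrite leqNgt; apply/negP => mltn.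
  have := prim_expr_order pm; rewrite cis_pow !RmultE => /eqP; rewrite eq_complex /= => /andP[/eqP hc /eqP hs].
  set x := m%:R * th in hc hs.
  have x0 : 0 < x by rewrite mulr_gt0 // ltr0n.
  have x2 : x < PI *+ 2.
    by rewrite /x /th mulrCA gtr_pMr ?mulrn_wgt0 // ltr_pdivrMr ?ltr0n // mul1r ltr_nat.
  case: (lerP x PI) => hx.
    have : Rdefinitions.Rlt (cos x) (cos 0).
      apply: (cos_decreasing_1 0 x); try apply/RleP; try apply/RltP; rewrite ?lexx //; exact: ltW.
    by rewrite hc cos_0; move/RltP; rewrite ltxx.
  have : Rdefinitions.Rlt (sin x) 0 by apply: sin_lt_0; apply/RltP => //; rewrite -PI2E.
  by rewrite hs; move/RltP; rewrite ltxx.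
exists (Complex (cos th) (sin th)); split => //=; first by rewrite en.
  pose p3 : R := GRing.mul PI (GRing.inv 3%:R).
  have PI3 : th <= p3.
    rewrite /th /p3 ler_pdivrMr ?ltr0n // mulrAC ler_pdivlMr ?ltr0n //.
    have h6 : 6%:R <= n%:R :> R by rewrite ler_nat.
    rewrite -mulr_natl; nra.
  have cp3 : cos p3 = 2%:R^-1.
    by have := cos_PI3; rewrite !RdivE !IZRposE !INRE /= mul1r.
  have p3_le : p3 <= PI by rewrite /p3 ler_pdivrMr ?ltr0n //; nra.
  have p3_ge0 : 0 <= p3 by rewrite /p3 divr_ge0 // ltW.
  have th_le : th <= PI by apply: le_trans PI3 p3_le.
  have hc : cos p3 <= cos th.
    case: (lerP p3 th) => h.
      by have -> : th = p3 by apply/eqP; rewrite eq_le h PI3.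
    apply/ltW/RltP; apply: cos_decreasing_1; try apply/RleP; try apply/RltP => //.
    - exact: (ltW thgt0).
    - exact: th_le.
    - exact: p3_ge0.
    - exact: p3_le.
  rewrite cp3 in hc; lra.
have := sin2_cos2 th; rewrite /Rsqr !RmultE RplusE -!expr2 addrC; done.
Qed.

Lemma root_prod_has (F : idomainType) (I : Type) (s : seq I) (f : I -> {poly F}) x :
  root (\prod_(i <- s) f i) x = has (fun i => root (f i) x) s.
Proof.
elim: s => [|a s IH]; first by rewrite big_nil rootE hornerC oner_eq0.
by rewrite big_cons rootM IH.
Qed.

Lemma Phi_root (F : fieldType) n (z : F) :
  n.-primitive_root z -> root (map_poly intr 'Phi_n) z.
Proof.
move=> pz; have n0 := prim_order_gt0 pz.
have rootX (d : nat) (y : F) : (0 < d)%N -> y ^+ d = 1 ->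
    has (fun e => root (map_poly intr 'Phi_e) y) (divisors d).
  move=> d0 yd.
  have := prod_Cyclotomic d0 => /(congr1 (map_poly (intr : int -> F))).
  rewrite rmorph_prod rmorphB rmorph1 /= map_polyXn => E.
  have : root ('X^d - 1) y by rewrite rootE !hornerE yd subrr.
  by rewrite -E root_prod_has.
have /hasP[d dn rd] := rootX n z n0 (prim_expr_order pz).
have dvd : (d %| n)%N by rewrite dvdn_divisors.
have [/eqP <- // | ne] := boolP (d == n).
have d0 : (0 < d)%N := dvdn_gt0 n0 dvd.
exfalso.
have zd : z ^+ d = 1.
  have := prod_Cyclotomic d0 => /(congr1 (map_poly (intr : int -> F))).
  rewrite rmorph_prod rmorphB rmorph1 /= map_polyXn => E.
  have : root ('X^d - 1) z.
    rewrite -E root_prod_has; apply/hasP; exists d => //.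
    by rewrite -dvdn_divisors.
  by rewrite rootE !hornerE subr_eq0 => /eqP.
have := prim_order_dvd pz d; rewrite zd eqxx => /(dvdn_leq d0) nd.
have := dvdn_leq n0 dvd => dn'; by move: ne; rewrite eqn_leq nd dn'.
Qed.

Arguments Phi_root {F n z}.

Lemma galois_transfer n (z1 z2 : CC) (P : {poly rat}) :
  n.-primitive_root z1 -> n.-primitive_root z2 ->
  (map_poly ratr P).[z1] = 0 -> (map_poly ratr P).[z2] = 0.
Proof.
move=> p1 p2 P1.
have n0 := prim_order_gt0 p1.
pose Phi : {poly rat} := map_poly intr 'Phi_n.
have ePhi (F : unitRingType) : map_poly (ratr : rat -> F) Phi = map_poly intr 'Phi_n.
  have r0 : ratr 0 = 0 :> F by have := ratr_int F 0; rewrite mulr0z.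
  apply/polyP => i; rewrite coef_map_id0 // !coef_map /=; exact: ratr_int.
have nc : ~~ coprimep P Phi.
  apply/negP => cop.
  have := coprimep_root (_ : coprimep (map_poly (ratr : rat -> CC) P) (map_poly ratr Phi)) (introT eqP P1).
  rewrite coprimep_map => /(_ cop) /negP; apply.
  by have := Phi_root p1; rewrite -(ePhi CC).
have ncC : ~~ coprimep (map_poly (ratr : rat -> algC) P) (map_poly ratr Phi) by rewrite coprimep_map.
have [w rw] : exists w, root (gcdp (map_poly (ratr : rat -> algC) P) (map_poly ratr Phi)) w.
  by apply/closed_rootP.
have wP : root (map_poly (ratr : rat -> algC) P) w := root_dvdp (dvdp_gcdl _ _) rw.
have wPhi : root (map_poly (ratr : rat -> algC) Phi) w := root_dvdp (dvdp_gcdr _ _) rw.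
have [zc pzc] := C_prim_root_exists n0.
have pw : n.-primitive_root w.
  by rewrite -(root_cyclotomic pzc) -(Cintr_Cyclotomic pzc) -ePhi.
have [p [Dp _] Hp] := minCpolyP w.
have ep : p = Phi.
  apply: (map_inj_poly (fmorph_inj (ratr : {rmorphism rat -> algC})) _); first by rewrite rmorph0.
  rewrite -Dp (minCpoly_cyclotomic pw) -(Cintr_Cyclotomic pw); symmetry; exact: ePhi.
have dv : (Phi %| P)%R by rewrite -ep -Hp.
rewrite -(divpK dv) rmorphM hornerM.
have := Phi_root p2; rewrite -(ePhi CC) /root => /eqP h.
apply/eqP; rewrite mulf_eq0; apply/orP; right; apply/eqP; exact: h.
Qed.

Local Open Scope complex_scope.
Lemma negcf_gt1 c : (0 < size c)%N -> all (fun ci => 2 <= ci)%N c -> 1 < negcf c.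
Proof.
elim: c => [//|a t IH] _ /= /andP[a2 At].
case: t IH At => [|b t] IH At.
  by rewrite ltr1n.
have h := IH isT At.
move: h; set y := negcf (b :: t) => h.
have y0 : 0 < y by apply: lt_trans h.
have iy : y^-1 < 1 by rewrite invf_lt1.
have : 2%:R <= a%:R :> rat by rewrite ler_nat.
lra.
Qed.

Lemma S_values_mem (z : CC) c : (0 < size c)%N -> all (fun ci => 2 <= ci)%N c ->
  S_values z (Spoly z c).
Proof.
move=> s a; exists (negcf c), c; split; first exact: negcf_gt1.
by split.
Qed.

Lemma pigeon (T : eqType) (f : nat -> T) (l : seq T) :
  (forall j k, f j = f k -> j = k) -> (forall k, f k \in l) -> False.
Proof.
move=> inj hl.
have U : uniq (map f (iota 0 (size l).+1)) by rewrite map_inj_uniq ?iota_uniq.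
have sub : {subset map f (iota 0 (size l).+1) <= l}.
  by move=> x /mapP[k _ ->].
by have := uniq_leq_size U sub; rewrite size_map size_iota ltnn.
Qed.

Lemma sqD (F : fieldType) (q : F) a b : sq q (a + b) = sq q a + q ^+ a * sq q b.
Proof.
elim: a => [|a IH]; first by rewrite add0n /sq big_ord0 expr0 add0r mul1r.
by rewrite addSn !sqS IH exprS; ring.
Qed.

Lemma sq_sub1 (F : fieldType) (q : F) m : (q - 1) * sq q m = q ^+ m - 1.
Proof.
elim: m => [|m IH]; first by rewrite /sq big_ord0 expr0 mulr0 subrr.
by rewrite sqS exprS; rewrite mulrDr mulr1 mulrCA IH; ring.
Qed.

Lemma sq_1 (F : fieldType) m : sq (1 : F) m = m%:R.
Proof.
elim: m => [|m IH]; first by rewrite /sq big_ord0.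
by rewrite sqS IH mul1r -natr1 addrC.
Qed.

Lemma fam2 (F : fieldType) (q : F) k : q != 0 ->
  Mq q (nseq k 2) ord0 ord0 = sq q k.+1 /\ Mq q (nseq k 2) ord_max ord0 = sq q k.
Proof.
move=> q0; elim: k => [|k [IH1 IH2]].
  by rewrite Mq_nil00 Mq_nil10 /sq big_ord1 big_ord0 expr0.
split; last by rewrite /= Mq_col1 IH1.
rewrite [nseq _ _]/= Mq_col0 IH1 IH2 !sqS /sq big_ord0.
by field.
Qed.

Lemma fam2_inj (z : CC) : z != 0 -> (forall m, (0 < m)%N -> z ^+ m = 1 -> z = 1) ->
  forall j k, sq z j.+1 = sq z k.+1 -> j = k.
Proof.
move=> z0 H.
suff lt : forall j k, (j < k)%N -> sq z j.+1 = sq z k.+1 -> False.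
  move=> j k e; case: (ltngtP j k) => // h; [exact: (False_ind _ (lt _ _ h e)) | exact: (False_ind _ (lt _ _ h (esym e)))].
move=> j k jk e.
have ek : k.+1 = (j.+1 + (k - j))%N by lia.
have e2 : sq z j.+1 + z ^+ j.+1 * sq z (k - j) = sq z j.+1 + 0 by rewrite addr0 -sqD -ek e.
have := addrI _ e2 => /eqP; rewrite mulf_eq0 expf_eq0 (negbTE z0) andbF /= => /eqP sm.
have m0 : (0 < k - j)%N by lia.
have [z1 | z1] := eqVneq z 1.
  by move: sm; rewrite z1 sq_1 => /eqP; rewrite pnatr_eq0; lia.
have : z ^+ (k - j) = 1 by apply/eqP; rewrite -subr_eq0 -sq_sub1 sm mulr0.
by move/(H _ m0) => /eqP; rewrite (negbTE z1).
Qed.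

Definition X3 (F : fieldType) (q : F) k := Mq q (nseq k 3) ord0 ord0.

Lemma X3_0 (F : fieldType) (q : F) : X3 q 0 = 1.
Proof. exact: Mq_nil00. Qed.

Lemma sq3 (F : fieldType) (q : F) : sq q 3 = 1 + q + q ^+ 2.
Proof. by rewrite !sqS /sq big_ord0; ring. Qed.

Lemma X3_1 (F : fieldType) (q : F) : X3 q 1 = 1 + q + q ^+ 2.
Proof. by rewrite /X3 [nseq _ _]/= Mq_col0 Mq_nil00 Mq_nil10 sq3; ring. Qed.

Lemma X3_SS (F : fieldType) (q : F) k : q != 0 ->
  X3 q k.+2 = (1 + q + q ^+ 2) * X3 q k.+1 - q ^+ 2 * X3 q k.
Proof.
move=> q0; rewrite /X3 [nseq k.+2 _]/= Mq_col0 Mq_col1 sq3.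
by congr (_ - _ * _); field.
Qed.

Fixpoint P3 (k : nat) : {poly rat} :=
  match k with
  | 0 => 1
  | 1 => 1 + 'X + 'X^2
  | (k'.+1 as k1).+1 => (1 + 'X + 'X^2) * P3 k1 - 'X^2 * P3 k'
  end.

Lemma P3_eval (F : numFieldType) (q : F) k : q != 0 -> (map_poly ratr (P3 k)).[q] = X3 q k.
Proof.
move=> q0.
have cq : commr_rmorph (ratr : {rmorphism rat -> F}) q by move=> a; rewrite /GRing.comm mulrC.
have E p : (map_poly ratr p).[q] = horner_morph cq p by [].
suff : (map_poly ratr (P3 k)).[q] = X3 q k /\ (map_poly ratr (P3 k.+1)).[q] = X3 q k.+1 by case.
rewrite !E.
elim: k => [|k [IH1 IH2]].
  by rewrite X3_0 X3_1 /= !(rmorphD, rmorphXn, rmorph1) /= horner_morphX.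
split => //.
rewrite X3_SS // -IH1 -IH2 [P3 _.+2]/=.
by rewrite !(rmorphB, rmorphM, rmorphD, rmorphXn, rmorph1) /= horner_morphX.
Qed.

Fixpoint U (t : R) (k : nat) : R :=
  match k with
  | 0 => GRing.one R
  | 1 => t
  | (k'.+1 as k1).+1 => GRing.add (GRing.mul t (U t k1)) (GRing.opp (U t k'))
  end.

Lemma U_mono t : 2%:R <= t -> forall k, 1 <= U t k /\ U t k + 1 <= U t k.+1.
Proof.
move=> t2; elim => [|k [IH1 IH2]].
  rewrite /=; split; lra.
split; first lra.
have -> : U t k.+2 = t * U t k.+1 - U t k by [].
nra.
Qed.

Lemma U_inj t : 2%:R <= t -> forall j k, U t j = U t k -> j = k.
Proof.
move=> t2.
have lt : forall j k, (j < k)%N -> U t j < U t k.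
  move=> j k; elim: k => [//|k IH]; rewrite ltnS leq_eqVlt => /orP[/eqP -> | jk].
    have [_ h] := U_mono t2 k; lra.
  have [_ h] := U_mono t2 k; have := IH jk; lra.
move=> j k e; case: (ltngtP j k) => // h.
  by have := lt _ _ h; rewrite e ltxx.
by have := lt _ _ h; rewrite e ltxx.
Qed.

Definition tz (z : CC) : R := GRing.add (GRing.one R) (GRing.mul 2%:R (complex.Re z)).

Lemma X3_z0 (z0 : CC) k :
  complex.Re z0 ^+ 2 + complex.Im z0 ^+ 2 = 1 ->
  X3 z0 k = z0 ^+ k * (U (tz z0) k)%:C.
Proof.
case: z0 => a b /= h.
rewrite /tz /=; set t := GRing.add _ _.
have z00 : (Complex a b : CC) != 0.
  apply/negP => /eqP; case => a0 b0; move: h; rewrite a0 b0; lra.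
have key : 1 + (Complex a b : CC) + (Complex a b) ^+ 2 = Complex a b * t%:C.
  apply/eqP; rewrite eq_complex /= /t; apply/andP; split; apply/eqP; rewrite ?expr2 /=.
    rewrite !expr2 in h; lra.
  ring.
suff : X3 (Complex a b : CC) k = (Complex a b) ^+ k * (U t k)%:C /\
       X3 (Complex a b : CC) k.+1 = (Complex a b) ^+ k.+1 * (U t k.+1)%:C by case.
elim: k => [|k [IH1 IH2]].
  by rewrite X3_0 X3_1 /= expr0 mul1r expr1 key.
split => //.
rewrite X3_SS // IH1 IH2 key.
have -> : U t k.+2 = t * U t k.+1 - U t k by [].
rewrite rmorphB rmorphM /= !exprS; ring.
Qed.

Lemma X3_z0_inj (z0 : CC) :
  complex.Re z0 ^+ 2 + complex.Im z0 ^+ 2 = 1 -> 1 <= 2%:R * complex.Re z0 ->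
  forall j k, X3 z0 j = X3 z0 k -> j = k.
Proof.
move=> h1 h2.
have t2 : 2%:R <= tz z0 by rewrite /tz /=; lra.
have nz : `|z0| = 1 by rewrite normc_def h1 sqrtr1.
have nU k : `|(U (tz z0) k)%:C| = (U (tz z0) k)%:C.
  apply: ger0_norm; rewrite ler0c; have [h _] := U_mono t2 k; lra.
move=> j k; rewrite !X3_z0 // => /(congr1 Num.norm); rewrite !normrM !normrX nz !expr1n !mul1r !nU.
by move/complexI; apply: U_inj.
Qed.

Lemma all_nseq_ge2 k m : (2 <= m)%N -> all (fun ci => 2 <= ci)%N (nseq k m).
Proof. by move=> m2; apply/allP => x; rewrite mem_nseq => /andP[_ /eqP ->]. Qed.

Lemma forward (zeta : CC) : zeta != 0 -> finite_subset (S_values zeta) ->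
  exists n : nat, (n \in [:: 2; 3; 4; 5]%N) /\ n.-primitive_root zeta.
Proof.
move=> z0 [l Hl].
case: (classic (exists m, (0 < m)%N /\ zeta ^+ m = 1 /\ zeta != 1)) => [[m [m0 [zm z1]]] | nH].
  have [n pn _] := prim_order_exists m0 zm.
  have n0 := prim_order_gt0 pn.
  have n1 : n != 1%N.
    apply/eqP => e; move: pn; rewrite e => /prim_expr_order; rewrite expr1 => e1.
    by move: z1; rewrite e1 eqxx.
  case: (leqP n 5) => n5.
    exists n; split => //; move: n0 n1 n5; rewrite !inE.
    by case: n {pn} => [|[|[|[|[|[|]]]]]].
  exfalso.
  have [w [pw hw1 hw2]] := trig_root n5.
  have w0 : w != 0.
    apply/negP => /eqP e; have := prim_expr_order pw; rewrite e expr0n (gtn_eqF n0) /=.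
    by move/eqP; rewrite eq_sym oner_eq0.
  have E (q : CC) k : q != 0 -> X3 q k = (map_poly ratr (P3 k)).[q].
    by move=> q0; symmetry; apply: P3_eval.
  apply: (@pigeon _ (fun k => X3 zeta k) l).
    move=> j k e; apply: (X3_z0_inj hw2 hw1).
    have h : (map_poly (ratr : rat -> CC) (P3 j - P3 k)).[zeta] = 0.
      by rewrite rmorphB hornerD hornerN -!E // e subrr.
    have := galois_transfer pn pw h.
    rewrite rmorphB hornerD hornerN -!E // => /eqP; rewrite subr_eq0 => /eqP.
    done.
  move=> k; apply: Hl.
  have -> : X3 zeta k = Spoly zeta (nseq k.+1 3) by rewrite /Spoly [nseq _ _]/= Mq_col1.
  by apply: S_values_mem => //; apply: all_nseq_ge2.
have H : forall m, (0 < m)%N -> zeta ^+ m = 1 -> zeta = 1.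
  move=> m m0 zm; apply/eqP; apply: contraT => z1; exfalso; apply: nH; by exists m.
exfalso.
apply: (@pigeon _ (fun k => sq zeta k.+1) l); first exact: fam2_inj.
move=> k; apply: Hl.
have -> : sq zeta k.+1 = Spoly zeta (nseq k.+1 2).
  by rewrite /Spoly [nseq _ _]/= Mq_col1; have [-> _] := fam2 k z0.
by apply: S_values_mem => //; apply: all_nseq_ge2.
Qed.

Fixpoint addl (x y : seq int) : seq int :=
  match x, y with
  | a :: x', b :: y' => (a + b) :: addl x' y'
  | [::], _ => y
  | _, [::] => x
  end.
Definition scl (k : int) (x : seq int) := map (fun a => k * a) x.
Definition mulz (red x : seq int) := addl (0 :: take (size red).-1 x) (scl (last 0 x) red).
Fixpoint mulp (red p x : seq int) : seq int :=
  match p with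
  | [::] => nseq (size red) 0
  | a :: p' => addl (scl a x) (mulp red p' (mulz red x))
  end.
Definition one (red : seq int) : seq int := 1 :: nseq (size red).-1 0.
Definition zero (red : seq int) : seq int := nseq (size red) 0.
Definition pw (red : seq int) k x := iter k (mulz red) x.
Fixpoint srep (red : seq int) r :=
  match r with 0 => zero red | r'.+1 => addl (srep red r') (pw red r' (one red)) end.
Definition mrep (n : nat) (red : seq int) r := scl (-1) (pw red (r + n).-1 (one red)).
Definition step n red r (v : seq int * seq int) :=
  (addl (mulp red (srep red r) v.1) (mulp red (mrep n red r) v.2), v.1).
Definition grow n red (V : seq (seq int * seq int)) :=
  undup (V ++ flatten [seq [seq step n red r v | r <- iota 0 n] | v <- V]).
Definition clos n red fuel := iter fuel (grow n red) [:: (one red, zero red)].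
Definition check n red (V : seq (seq int * seq int)) :=
  [&& (one red, zero red) \in V,
      all (fun v => (size v.1 == size red) && (size v.2 == size red)) V &
      all (fun v => all (fun r => step n red r v \in V) (iota 0 n)) V].

Definition red2 : seq int := [:: -1].
Definition red3 : seq int := [:: -1; -1].
Definition red4 : seq int := [:: -1; 0].
Definition red5 : seq int := [:: -1; -1; -1; -1].
Definition V2 := clos 2 red2 10.
Definition V3 := clos 3 red3 20.
Definition V4 := clos 4 red4 20.
Definition V5 := clos 5 red5 30.
Lemma check2 : check 2 red2 V2. Proof. by vm_compute. Qed.
Lemma check3 : check 3 red3 V3. Proof. by vm_compute. Qed.
Lemma check4 : check 4 red4 V4. Proof. by vm_compute. Qed.
Lemma check5 : check 5 red5 V5. Proof. by vm_compute. Qed.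

Section Sound.
Variable F : fieldType.
Variable z : F.

Definition ev (x : seq int) : F := foldr (fun a acc => a%:~R + z * acc) 0 x.

Lemma ev_add x y : ev (addl x y) = ev x + ev y.
Proof.
elim: x y => [|a x IH] [|b y] /=; rewrite ?add0r ?addr0 //.
by rewrite IH rmorphD /=; ring.
Qed.

Lemma ev_scl k x : ev (scl k x) = k%:~R * ev x.
Proof.
elim: x => [|a x IH] /=; first by rewrite mulr0.
by rewrite IH intrM; ring.
Qed.

Lemma ev_nseq0 m : ev (nseq m 0) = 0.
Proof. elim: m => [|m IH]; first by []. rewrite /= IH mulr0 addr0. exact: mulr0z. Qed.

Lemma ev_rcons y a : ev (rcons y a) = ev y + a%:~R * z ^+ size y.
Proof.
elim: y => [|b y IH] /=; first by rewrite mulr0 addr0 expr0 mulr1 add0r.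
by rewrite IH exprS; ring.
Qed.

Lemma size_addl x y : size (addl x y) = maxn (size x) (size y).
Proof.
by elim: x y => [|a x IH] [|b y] /=; rewrite ?max0n ?maxn0 ?IH ?maxnSS.
Qed.

Variable red : seq int.
Hypothesis red0 : (0 < size red)%N.
Hypothesis zred : z ^+ size red = ev red.
Local Notation d := (size red).

Lemma size_mulz x : size x = d -> size (mulz red x) = d.
Proof.
move=> sx; rewrite /mulz size_addl /= size_take sx size_map.
by case: d red0 => // d' _ /=; rewrite ltnSn maxnn.
Qed.

Lemma ev_mulz x : size x = d -> ev (mulz red x) = z * ev x.
Proof.
move=> sx; have : x != [::] by apply/eqP => e; move: sx red0; rewrite e /= => <-.
case/lastP: x sx => // y a; rewrite size_rcons => sy _.
rewrite /mulz ev_add ev_scl last_rcons.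
have -> : d.-1 = size y by rewrite -sy.
rewrite -cats1 take_size_cat //= cats1 ev_rcons -zred -sy exprS mulr0z; ring.
Qed.

Lemma size_mulp p x : size x = d -> size (mulp red p x) = d.
Proof.
elim: p x => [|a p IH] x sx /=; first by rewrite size_nseq.
by rewrite size_addl size_map sx IH ?size_mulz // maxnn.
Qed.

Lemma ev_mulp p x : size x = d -> ev (mulp red p x) = ev p * ev x.
Proof.
elim: p x => [|a p IH] x sx /=; first by rewrite ev_nseq0 mul0r.
by rewrite ev_add ev_scl IH ?size_mulz // ev_mulz //; ring.
Qed.

Lemma size_pw k x : size x = d -> size (pw red k x) = d.
Proof. by move=> sx; elim: k => [|k IH] //=; rewrite size_mulz. Qed.

Lemma ev_pw k x : size x = d -> ev (pw red k x) = z ^+ k * ev x.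
Proof.
move=> sx; elim: k => [|k IH] /=; first by rewrite mul1r.
by rewrite ev_mulz ?size_pw // IH exprS mulrA.
Qed.

Lemma size_one : size (one red) = d.
Proof. by rewrite /one /= size_nseq prednK. Qed.

Lemma ev_one : ev (one red) = 1.
Proof. by rewrite /one /= ev_nseq0 mulr0 addr0. Qed.

Lemma ev_zero : ev (zero red) = 0.
Proof. exact: ev_nseq0. Qed.

Lemma ev_srep r : ev (srep red r) = sq z r.
Proof.
elim: r => [|r IH] /=; first by rewrite ev_zero /sq big_ord0.
by rewrite ev_add IH ev_pw ?size_one // ev_one mulr1 /sq big_ord_recr.
Qed.

Variable n : nat.
Hypothesis n0 : (0 < n)%N.
Hypothesis zn : z ^+ n = 1.
Hypothesis sqn : sq z n = 0.

Lemma z0 : z != 0.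
Proof. by apply/negP => /eqP e; move: zn; rewrite e expr0n (gtn_eqF n0) => /eqP; rewrite eq_sym oner_eq0. Qed.

Lemma ev_mrep r : ev (mrep n red r) = - (z ^+ r * z^-1).
Proof.
rewrite /mrep ev_scl ev_pw ?size_one // ev_one mulr1.
have e : z ^+ (r + n).-1 = z ^+ r * z^-1.
  apply: (mulIf z0); rewrite -mulrA mulVf ?z0 // mulr1 -exprSr prednK; last by lia.
  by rewrite exprD zn mulr1.
by rewrite e mulrN1z mulN1r.
Qed.

Lemma sq_mod a : sq z a = sq z (a %% n)%N.
Proof.
rewrite {1}(div.divn_eq a n) sqD.
have -> : sq z ((a %/ n * n)%N) = 0.
  elim: (a %/ n)%N => [|m IH]; first by rewrite mul0n /sq big_ord0.
  by rewrite mulSn sqD sqn IH mulr0 addr0.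
by rewrite add0r mulnC exprM zn expr1n mul1r.
Qed.

Lemma exp_mod a : z ^+ a = z ^+ (a %% n)%N.
Proof. by rewrite {1}(div.divn_eq a n) exprD mulnC exprM zn expr1n mul1r. Qed.

Variable V : seq (seq int * seq int).
Hypothesis chk : check n red V.

Lemma sound c : exists2 w, w \in V & ev w.1 = Mq z c ord0 ord0 /\ ev w.2 = Mq z c ord_max ord0.
Proof.
move: chk => /and3P[inV /allP szV /allP clV].
elim: c => [|a t [w wV [e1 e2]]].
  exists (one red, zero red) => //; by rewrite Mq_nil00 Mq_nil10 ev_one ev_zero.
have /andP[/eqP s1 /eqP s2] := szV w wV.
have r_lt : ((a %% n)%N < n)%N by rewrite ltn_mod.
exists (step n red (a %% n)%N w).
  by have /allP := clV w wV; apply; rewrite mem_iota add0n r_lt.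
rewrite Mq_col0 Mq_col1 /step /= ev_add !ev_mulp // ev_srep ev_mrep -e1 -e2.
by rewrite -sq_mod -exp_mod; split => //; ring.
Qed.
End Sound.

Lemma fin_of (zeta : CC) n red V : (0 < size red)%N -> zeta ^+ size red = ev zeta red ->
  (0 < n)%N -> zeta ^+ n = 1 -> sq zeta n = 0 -> check n red V ->
  finite_subset (S_values zeta).
Proof.
move=> red0 zred n0 zn sqn chk.
exists (map (fun w => ev zeta w.2) V) => _ [x [c [_ [_ ->]]]].
have [w wV [_ e2]] := @sound _ zeta red red0 zred n n0 zn sqn V chk c.
by apply/mapP; exists w => //; rewrite e2.
Qed.

Lemma sq_prim (F : fieldType) (z : F) n : n.-primitive_root z -> (1 < n)%N -> sq z n = 0.
Proof.
move=> pz n1.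
have z1 : z - 1 != 0.
  rewrite subr_eq0; apply/negP => /eqP e.
  have := prim_order_dvd pz 1; rewrite e expr1 eqxx => h; have := dvdn_leq (ltn0Sn 0) h; lia.
apply: (mulfI z1); rewrite sq_sub1 (prim_expr_order pz) subrr mulr0 //.
Qed.

Lemma backward (zeta : CC) n : n \in [:: 2; 3; 4; 5]%N -> n.-primitive_root zeta ->
  finite_subset (S_values zeta).
Proof.
rewrite !inE => hn pz.
have n1 : (1 < n)%N by move: hn => /or4P[] /eqP ->.
have n0 : (0 < n)%N by lia.
have sqn := sq_prim pz n1.
have zn := prim_expr_order pz.
case/or4P: hn => /eqP en; subst n.
- apply: (@fin_of zeta 2 red2 V2 _ _ n0 zn sqn check2) => //.
  rewrite /ev /= mulr0 addr0 expr1 mulrN1z.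
  move: sqn; rewrite !sqS /sq big_ord0 => h.
  by transitivity (zeta - (1 + zeta * (1 + zeta * 0))); [rewrite h subr0 | ring].
- apply: (@fin_of zeta 3 red3 V3 _ _ n0 zn sqn check3) => //.
  rewrite /ev /= mulr0 addr0 mulrN1z.
  move: sqn; rewrite !sqS /sq big_ord0 => h.
  by transitivity (zeta ^+ 2 - (1 + zeta * (1 + zeta * (1 + zeta * 0)))); [rewrite h subr0 | ring].
- apply: (@fin_of zeta 4 red4 V4 _ _ n0 zn sqn check4) => //.
  rewrite /ev /= mulr0 mulr0z addr0 mulr0 addr0 mulrN1z.
  move: sqn; rewrite !sqS /sq big_ord0 => h.
  have h2 : (1 + zeta) * (1 + zeta ^+ 2) = 0.
    by transitivity (1 + zeta * (1 + zeta * (1 + zeta * (1 + zeta * 0)))); [ring | rewrite h].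
  have z1 : 1 + zeta != 0.
    apply/negP => /eqP e; have ez : zeta = -1 by apply/eqP; rewrite -subr_eq0 opprK addrC e.
    have := prim_order_dvd pz 2; rewrite ez sqrrN expr1n eqxx.
    by move=> hd; have := dvdn_leq (ltn0Sn 1) hd.
  move: h2 => /eqP; rewrite mulf_eq0 (negbTE z1) /= => /eqP h3.
  by transitivity (zeta ^+ 2 - (1 + zeta ^+ 2)); [rewrite h3 subr0 | ring].
- apply: (@fin_of zeta 5 red5 V5 _ _ n0 zn sqn check5) => //.
  rewrite /ev /= mulr0 addr0 mulrN1z.
  move: sqn; rewrite !sqS /sq big_ord0 => h.
  by transitivity (zeta ^+ 4 - (1 + zeta * (1 + zeta * (1 + zeta * (1 + zeta * (1 + zeta * 0)))))); [rewrite h subr0 | ring].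
Qed.

Local Close Scope complex_scope.

Theorem corollary4p2 (zeta : CC) (hzeta : zeta != 0) :
  finite_subset (S_values zeta) <->
  exists n : nat, (n \in [:: 2; 3; 4; 5]%N) /\ n.-primitive_root zeta.
Proof.
split; first exact: forward.
by case=> n [hn pn]; exact: (backward hn pn).
Qed.
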